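(* Let $n\geq 3$, $k\in\mathbb{Z}_n$ with $k\neq 0$ and $2k\not\equiv 0\pmod n$, and let $C$ be a total perfect code in $\mathrm{GP}(n,k)$ such that $u_\ell,u_{\ell+1}\in C$ for some $\ell\in\mathbb{Z}_n$. Then $u_{\ell+6},u_{\ell+7}\in C$; consequently $n\equiv 0\pmod 6$ and $C\cap U=\{u_{\ell+6i},u_{\ell+6i+1}\mid i\in\mathbb{Z}_n\}$.
   Context: For an integer $n\geq 3$ and a nonzero $k\in\mathbb{Z}_n$, the generalized Petersen graph $\mathrm{GP}(n,k)$ is the simple graph with vertex set $\{u_i,v_i\mid i\in\mathbb{Z}_n\}$ and edges $u_iu_{i+1}$, $u_iv_i$, $v_iv_{i+k}$ for all $i\in\mathbb{Z}_n$ (indices modulo $n$). Let $U=\{u_i\mid i\in\mathbb{Z}_n\}$. A total perfect code in a graph $\Gamma$ is a set $C\subseteq V(\Gamma)$ such that every vertex of $\Gamma$ is adjacent to exactly one vertex of $C$. *)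

(* Defs.v *)
From mathcomp Require Import all_boot all_order all_algebra.
Set Implicit Arguments. Unset Strict Implicit. Unset Printing Implicit Defensive.
Import GRing.Theory.
Local Open Scope ring_scope.

(* Vertices of GP(n,k): inl i = u_i, inr i = v_i, i in Z_n (use only for n >= 2). *)
Definition gpvert (n : nat) : finType := ('Z_n + 'Z_n)%type.

Definition gp_adj (n : nat) (k : 'Z_n) (x y : gpvert n) : bool :=
  match x, y with
  | inl i, inl j => (j == i + 1) || (i == j + 1)
  | inl i, inr j => i == j
  | inr i, inl j => i == j
  | inr i, inr j => (j == i + k) || (i == j + k)
  end.

Definition outerU (n : nat) : {set gpvert n} :=
  [set x : gpvert n | if x is inl _ then true else false].

Definition total_perfect_code (n : nat) (k : 'Z_n) (C : {set gpvert n}) : Prop :=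
  forall x : gpvert n, #|[set y in C | gp_adj k x y]| = 1%N.

(* Main.v *)
Require Import Defs.
From mathcomp Require Import all_boot all_order all_algebra.
From mathcomp Require Import zify ring.
Import GRing.Theory.
Local Open Scope ring_scope.

Lemma eq_inl n (a b : 'Z_n) : ((inl a : gpvert n) == inl b) = (a == b).
Proof. by apply/eqP/eqP => [[->]|->]. Qed.
Lemma eq_inr n (a b : 'Z_n) : ((inr a : gpvert n) == inr b) = (a == b).
Proof. by apply/eqP/eqP => [[->]|->]. Qed.
Lemma eq_inlr n (a b : 'Z_n) : ((inl a : gpvert n) == inr b) = false.
Proof. by []. Qed.
Lemma eq_inrl n (a b : 'Z_n) : ((inr a : gpvert n) == inl b) = false.
Proof. by []. Qed.

Lemma two_neq0 (n : nat) : (3 <= n)%N -> (2%:R : 'Z_n) != 0.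
Proof.
move=> n3; apply/eqP => /(congr1 val); rewrite Zp_nat /= Zp_cast; last by lia.
by rewrite modn_small.
Qed.

Lemma card3 (T : finType) (C : {set T}) (P : pred T) (a b c : T) :
  uniq [:: a; b; c] -> (forall y, P y = (y \in [:: a; b; c])) ->
  #|[set y in C | P y]| = ((a \in C) + (b \in C) + (c \in C))%N.
Proof.
move=> u hP.
have -> : #|[set y in C | P y]| = #|[seq y <- [:: a; b; c] | y \in C]|.
  apply: eq_card => y; rewrite inE mem_filter hP andbC.
  by [].
rewrite (card_uniqP _) ?filter_uniq // size_filter /=.
by case: (a \in C); case: (b \in C); case: (c \in C).
Qed.

Lemma eqU (n : nat) (k : 'Z_n) (C : {set gpvert n}) (i : 'Z_n) :
  (3 <= n)%N -> total_perfect_code k C ->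
  (((inl (i - 1)%R : gpvert n) \in C) + ((inl (i + 1)%R : gpvert n) \in C)
   + ((inr i : gpvert n) \in C) = 1)%N.
Proof.
move=> n3 tpc; rewrite -(tpc (inl i)); symmetry; apply: card3.
  rewrite /= !inE eq_inl eq_inlr !orbF andbT.
  apply/eqP => /eqP; rewrite eq_sym -subr_eq0 opprB.
  have -> : i + 1 + (1 - i) = 2%:R by ring.
  by rewrite (negPf (@two_neq0 n n3)).
case=> j; rewrite /= !inE ?eq_inl ?eq_inr ?eq_inlr ?eq_inrl.
  rewrite orbF orbC; congr (_ || _).
  by rewrite [RHS]eq_sym subr_eq.
by rewrite eq_sym.
Qed.

Lemma eqV (n : nat) (k : 'Z_n) (C : {set gpvert n}) (i : 'Z_n) :
  k *+ 2 != 0 -> total_perfect_code k C ->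
  (((inl i : gpvert n) \in C) + ((inr (i - k)%R : gpvert n) \in C)
   + ((inr (i + k)%R : gpvert n) \in C) = 1)%N.
Proof.
move=> k2 tpc; rewrite -(tpc (inr i)); symmetry; apply: card3.
  rewrite /= !inE eq_inr andbT.
  apply/eqP => /eqP; rewrite eq_sym -subr_eq0 opprB.
  have -> : i + k + (k - i) = k *+ 2 by rewrite mulr2n; ring.
  by rewrite (negPf k2).
case=> j; rewrite /= !inE ?eq_inl ?eq_inr ?eq_inlr ?eq_inrl.
  by rewrite !orbF eq_sym.
rewrite /= orbC; congr (_ || _).
by rewrite [RHS]eq_sym subr_eq.
Qed.
Local Open Scope nat_scope.
Lemma core (A B : nat -> nat -> nat) :
  (forall j m, A j m <= 1) -> (forall j m, B j m <= 1) ->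
  (forall j m, A j m + A j.+2 m + B j.+1 m = 1) ->
  (forall j m, A j m.+1 + B j m + B j m.+2 = 1) ->
  A 10 5 = 1 -> A 11 5 = 1 ->
  [/\ A 16 5 = 1, A 17 5 = 1, A 12 5 = 0, A 13 5 = 0 & A 14 5 = 0 /\ A 15 5 = 0].
Proof.
move=> hA1 hB1 hA hB h0 h1.
have ? := hA 9 3.
have ? := hB 10 3.
have ? := hB 10 5.
have ? := hA 9 7.
have ? := hA 10 3.
have ? := hA 10 4.
have ? := hB 11 3.
have ? := hA 10 5.
have ? := hB 11 4.
have ? := hA 10 6.
have ? := hB 11 5.
have ? := hA 10 7.
have ? := hA 11 3.
have ? := hA 11 4.
have ? := hB 12 3.
have ? := hA 11 5.
have ? := hA 11 6.
have ? := hB 12 5.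
have ? := hA 11 7.
have ? := hA 12 3.
have ? := hA 12 4.
have ? := hB 13 3.
have ? := hA 12 5.
have ? := hB 13 4.
have ? := hA 12 6.
have ? := hB 13 5.
have ? := hA 12 7.
have ? := hA 13 3.
have ? := hA 13 4.
have ? := hB 14 3.
have ? := hA 13 5.
have ? := hB 14 4.
have ? := hA 13 6.
have ? := hB 14 5.
have ? := hA 13 7.
have ? := hA 14 3.
have ? := hA 14 4.
have ? := hB 15 3.
have ? := hA 14 5.
have ? := hB 15 4.
have ? := hA 14 6.
have ? := hB 15 5.
have ? := hA 14 7.
have ? := hA 15 3.
have ? := hA 15 4.
have ? := hB 16 3.
have ? := hA 15 5.
have ? := hB 16 4.
have ? := hA 15 6.
have ? := hB 16 5.
have ? := hA 15 7.
have ? := hA1 9 3.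
have ? := hA1 9 7.
have ? := hA1 10 3.
have ? := hA1 10 4.
have ? := hA1 10 5.
have ? := hA1 10 6.
have ? := hA1 10 7.
have ? := hA1 11 3.
have ? := hA1 11 4.
have ? := hA1 11 5.
have ? := hA1 11 6.
have ? := hA1 11 7.
have ? := hA1 12 3.
have ? := hA1 12 4.
have ? := hA1 12 5.
have ? := hA1 12 6.
have ? := hA1 12 7.
have ? := hA1 13 3.
have ? := hA1 13 4.
have ? := hA1 13 5.
have ? := hA1 13 6.
have ? := hA1 13 7.
have ? := hA1 14 3.
have ? := hA1 14 4.
have ? := hA1 14 5.
have ? := hA1 14 6.
have ? := hA1 14 7.
have ? := hA1 15 3.
have ? := hA1 15 4.
have ? := hA1 15 5.
have ? := hA1 15 6.
have ? := hA1 15 7.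
have ? := hA1 16 3.
have ? := hA1 16 4.
have ? := hA1 16 5.
have ? := hA1 16 6.
have ? := hA1 16 7.
have ? := hA1 17 3.
have ? := hA1 17 4.
have ? := hA1 17 5.
have ? := hA1 17 6.
have ? := hA1 17 7.
have ? := hB1 10 3.
have ? := hB1 10 5.
have ? := hB1 10 7.
have ? := hB1 11 3.
have ? := hB1 11 4.
have ? := hB1 11 5.
have ? := hB1 11 6.
have ? := hB1 11 7.
have ? := hB1 12 3.
have ? := hB1 12 4.
have ? := hB1 12 5.
have ? := hB1 12 6.
have ? := hB1 12 7.
have ? := hB1 13 3.
have ? := hB1 13 4.
have ? := hB1 13 5.
have ? := hB1 13 6.
have ? := hB1 13 7.
have ? := hB1 14 3.
have ? := hB1 14 4.
have ? := hB1 14 5.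
have ? := hB1 14 6.
have ? := hB1 14 7.
have ? := hB1 15 3.
have ? := hB1 15 4.
have ? := hB1 15 5.
have ? := hB1 15 6.
have ? := hB1 15 7.
have ? := hB1 16 3.
have ? := hB1 16 4.
have ? := hB1 16 5.
have ? := hB1 16 6.
have ? := hB1 16 7.
have h6 : A 16 5 = 1.
  have [e1|e1] : A 13 4 = 0 \/ A 13 4 = 1 by lia.
  have [e2|e2] : A 14 5 = 0 \/ A 14 5 = 1 by lia.
  lia. lia. lia.
have h7 : A 17 5 = 1.
  have [e1|e1] : B 13 4 = 0 \/ B 13 4 = 1 by lia.
  have [e2|e2] : A 10 4 = 0 \/ A 10 4 = 1 by lia.
  lia. lia.
  have [e2|e2] : A 10 6 = 0 \/ A 10 6 = 1 by lia.
  lia. lia.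
split; lia.
Qed.

Local Open Scope ring_scope.
Lemma step (n : nat) (k : 'Z_n) (C : {set gpvert n}) (l : 'Z_n) :
  (3 <= n)%N -> k *+ 2 != 0 -> total_perfect_code k C ->
  (inl l : gpvert n) \in C -> (inl (l + 1) : gpvert n) \in C ->
  [/\ (inl (l + 6%:R) : gpvert n) \in C, (inl (l + 7%:R) : gpvert n) \in C,
      (inl (l + 2%:R) : gpvert n) \notin C, (inl (l + 3%:R) : gpvert n) \notin C &
      (inl (l + 4%:R) : gpvert n) \notin C /\ (inl (l + 5%:R) : gpvert n) \notin C].
Proof.
move=> n3 k2 tpc hl hl1.
pose pos (j m : nat) : 'Z_n := l + j%:R - 10%:R + k *+ m - k *+ 5.
pose A j m : nat := (inl (pos j m) : gpvert n) \in C.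
pose B j m : nat := (inr (pos j m) : gpvert n) \in C.
have := @core A B.
have e : forall j, pos j 5 = l + j%:R - 10%:R by move=> j; rewrite /pos addrK.
rewrite /A /B !e.
have -> : l + 10%:R - 10%:R = l by rewrite addrK.
have -> : l + 11%:R - 10%:R = l + 1 by ring.
rewrite hl hl1.
have -> : l + 16%:R - 10%:R = l + 6%:R by ring.
have -> : l + 17%:R - 10%:R = l + 7%:R by ring.
have -> : l + 12%:R - 10%:R = l + 2%:R by ring.
have -> : l + 13%:R - 10%:R = l + 3%:R by ring.
have -> : l + 14%:R - 10%:R = l + 4%:R by ring.
have -> : l + 15%:R - 10%:R = l + 5%:R by ring.
case/(_ _ _ _ _ erefl erefl).
- by move=> j m; case: (_ \in C).
- by move=> j m; case: (_ \in C).
- move=> j m; have := @eqU n k C (pos j.+1 m) n3 tpc.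
  have -> : pos j.+1 m - 1 = pos j m by rewrite /pos; ring.
  have -> : pos j.+1 m + 1 = pos j.+2 m by rewrite /pos; ring.
  by [].
- move=> j m; have := @eqV n k C (pos j m.+1) k2 tpc.
  have -> : pos j m.+1 - k = pos j m by rewrite /pos; ring.
  have -> : pos j m.+1 + k = pos j m.+2 by rewrite /pos; ring.
  by rewrite addnC addnA.
move=> h6 h7 h2 h3 [h4 h5].
have b1 (b : bool) : (b : nat) = 1%N -> b by case: b.
have b0 (b : bool) : (b : nat) = 0%N -> ~~ b by case: b.
split; [exact: b1 h6|exact: b1 h7|exact: b0 h2|exact: b0 h3|split; [exact: b0 h4|exact: b0 h5]].
Qed.

Lemma natn0 (n : nat) : (1 < n)%N -> (n%:R : 'Z_n) = 0.
Proof. by move=> n1; apply/val_inj; rewrite /= Zp_nat /= Zp_cast // modnn. Qed.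

Theorem mainTheorem9 (n : nat) (k : 'Z_n) (C : {set gpvert n}) (l : 'Z_n) :
  (3 <= n)%N -> k != 0 -> k *+ 2 != 0 ->
  total_perfect_code k C ->
  (inl l : gpvert n) \in C -> (inl (l + 1) : gpvert n) \in C ->
  [/\ (inl (l + 6%:R) : gpvert n) \in C,
      (inl (l + 7%:R) : gpvert n) \in C,
      (6 %| n)%N &
      C :&: outerU n =
        [set (inl (l + i *+ 6) : gpvert n) | i : 'Z_n]
        :|: [set (inl (l + i *+ 6 + 1) : gpvert n) | i : 'Z_n]].
Proof.
move=> n3 k0 k2 tpc hl hl1.
have ind : forall i : nat, (inl (l + (i%:R : 'Z_n) *+ 6) : gpvert n) \in C /\
                           (inl (l + (i%:R : 'Z_n) *+ 6 + 1) : gpvert n) \in C.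
  elim=> [|i [IH1 IH2]]; first by rewrite mul0rn addr0.
  have [h6 h7 _ _ _] := @step n k C _ n3 k2 tpc IH1 IH2.
  split.
    by have -> : l + (i.+1)%:R *+ 6 = l + (i%:R : 'Z_n) *+ 6 + 6%:R by ring.
  by have -> : l + (i.+1)%:R *+ 6 + 1 = l + (i%:R : 'Z_n) *+ 6 + 7%:R by ring.
have modsix : forall d : nat, (inl (l + d%:R) : gpvert n) \in C -> (d %% 6 <= 1)%N.
  move=> d hd; have [I1 I2] := ind (d %/ 6)%N.
  have [_ _ h2 h3 [h4 h5]] := @step n k C _ n3 k2 tpc I1 I2.
  have ed : l + d%:R = l + ((d %/ 6)%N%:R : 'Z_n) *+ 6 + (d %% 6)%N%:R.
    by rewrite {1}(divn_eq d 6) natrD natrM -addrA mulr_natr.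
  move: hd; rewrite ed.
  have : (d %% 6 < 6)%N by rewrite ltn_mod.
  case: (d %% 6)%N => [|[|[|[|[|[|r]]]]]] //= _ hd.
  - by rewrite hd in h2.
  - by rewrite hd in h3.
  - by rewrite hd in h4.
  - by rewrite hd in h5.
have [h6 h7 _ _ _] := @step n k C _ n3 k2 tpc hl hl1.
have d6 : (6 %| n)%N.
  have [I1 I2] := ind (n %/ 6).+1.
  have e : l + ((n %/ 6).+1%:R : 'Z_n) *+ 6 = l + (6 - n %% 6)%N%:R.
    have -> : ((n %/ 6).+1%:R : 'Z_n) *+ 6 = ((n %/ 6).+1 * 6)%N%:R by rewrite natrM mulr_natr.
    rewrite mulSn.
    have -> : (6 + n %/ 6 * 6 = n + (6 - n %% 6))%N.
      by rewrite {2}(divn_eq n 6); have := ltn_mod n 6; lia.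
    by rewrite natrD natn0 ?add0r //; lia.
  rewrite e in I1 I2.
  have := modsix _ I1.
  rewrite -addrA natr1 in I2.
  have := modsix _ I2.
  rewrite /dvdn; move: (ltn_mod n 6) => /= hlt.
  lia.
split => //.
apply/setP => -[y|y]; rewrite !inE /= ?andbT ?andbF; last first.
  symmetry; apply/negP => /orP [] /imsetP [i _ //].
apply/idP/idP.
  move=> hy; set d := val (y - l).
  have ey : y = l + d%:R by rewrite natr_Zp addrC subrK.
  move: (modsix d); rewrite -ey => /(_ hy) hd.
  have ed : y = l + ((d %/ 6)%N%:R : 'Z_n) *+ 6 + (d %% 6)%N%:R.
    by rewrite ey {1}(divn_eq d 6) natrD natrM -addrA mulr_natr.
  move: hd ed; case: (d %% 6)%N => [|[|r]] // _ ->.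
    by rewrite addr0; apply/orP; left; apply: (imset_f (fun i => inl (l + i *+ 6))).
  by apply/orP; right; apply: (imset_f (fun i => inl (l + i *+ 6 + 1))).
case/orP => /imsetP [i _ [->]]; rewrite -(natr_Zp i); by case: (ind i).
Qed.
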